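(* Let $\Bbbk$ be a field and let $B$ be a filtered bialgebra over $\Bbbk$ (filtration $B_0\subset B_1\subset\cdots$, $\bigcup_n B_n=B$) such that $B_0$ is spanned by group-like elements. Let $I\subset B$ be the two-sided ideal generated by all elements $1-x$ with $x$ group-like. Then $I$ is also a two-sided coideal (i.e. $\Delta(I)\subset I\otimes B+B\otimes I$ and $\epsilon(I)=0$), and the quotient bialgebra $H:=B/I$, with the induced filtration $H_n:=$ image of $B_n$, is connected (i.e. $H_0=\Bbbk\cdot 1$); hence $H$ is a Hopf algebra.
   Context: A filtered bialgebra is a bialgebra $(B,m,1,\Delta,\epsilon)$ with an increasing sequence of subspaces $B_0\subset B_1\subset\cdots$, $\bigcup_n B_n=B$, such that $1\in B_0$, $B_iB_j\subset B_{i+j}$ and $\Delta(B_n)\subset\sum_{i+j=n}B_i\otimes B_j$. An element $x\neq 0$ is group-like if $\Delta(x)=x\otimes x$. *)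

(* Defs.v *)
From HB Require Import structures.
From mathcomp Require Import all_boot all_order all_algebra.
Set Implicit Arguments. Unset Strict Implicit. Unset Printing Implicit Defensive.
Import GRing.Theory.
Local Open Scope ring_scope.

(* Elements of U (x) V are represented by finite lists of elementary tensors
   [:: (u_1,v_1); ...] standing for  sum_i u_i (x) v_i.  Two representatives
   denote the same element of U (x) V iff every bilinear map U x V -> W into
   any K-module W takes the same value on them (this is equality in the
   algebraic tensor product, by its universal property). *)

Definition bilinear_map (K : fieldType) (U V W : lmodType K) (f : U -> V -> W) : Prop :=
  (forall (a : K) u1 u2 v, f (a *: u1 + u2) v = a *: f u1 v + f u2 v) /\
  (forall (a : K) u v1 v2, f u (a *: v1 + v2) = a *: f u v1 + f u v2).

Definition trilinear_map (K : fieldType) (U V X W : lmodType K)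
  (f : U -> V -> X -> W) : Prop :=
  (forall (a : K) u1 u2 v x, f (a *: u1 + u2) v x = a *: f u1 v x + f u2 v x) /\
  (forall (a : K) u v1 v2 x, f u (a *: v1 + v2) x = a *: f u v1 x + f u v2 x) /\
  (forall (a : K) u v x1 x2, f u v (a *: x1 + x2) = a *: f u v x1 + f u v x2).

Definition tensor_eq (K : fieldType) (U V : lmodType K) (s t : seq (U * V)) : Prop :=
  forall (W : lmodType K) (f : U -> V -> W), bilinear_map f ->
    \sum_(p <- s) f p.1 p.2 = \sum_(p <- t) f p.1 p.2.

Definition tensor3_eq (K : fieldType) (U V X : lmodType K)
  (s t : seq (U * V * X)) : Prop :=
  forall (W : lmodType K) (f : U -> V -> X -> W), trilinear_map f ->
    \sum_(p <- s) f p.1.1 p.1.2 p.2 = \sum_(p <- t) f p.1.1 p.1.2 p.2.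

Record is_bialgebra (K : fieldType) (B : algType K)
  (Delta : B -> seq (B * B)) (eps : B -> K) : Prop := {
  Delta_linear : forall (a : K) (x y : B),
    tensor_eq (Delta (a *: x + y))
              ([seq (a *: p.1, p.2) | p <- Delta x] ++ Delta y);
  Delta_coassoc : forall x : B,
    tensor3_eq [seq (q.1, q.2, p.2) | p <- Delta x, q <- Delta p.1]
               [seq (p.1, q.1, q.2) | p <- Delta x, q <- Delta p.2];
  eps_linear : forall (a : K) (x y : B), eps (a *: x + y) = a * eps x + eps y;
  counit_l : forall x : B, \sum_(p <- Delta x) eps p.1 *: p.2 = x;
  counit_r : forall x : B, \sum_(p <- Delta x) eps p.2 *: p.1 = x;
  Delta_mul : forall x y : B,
    tensor_eq (Delta (x * y))
              [seq (p.1 * q.1, p.2 * q.2) | p <- Delta x, q <- Delta y];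
  Delta_one : tensor_eq (Delta 1) [:: (1, 1)];
  eps_mul : forall x y : B, eps (x * y) = eps x * eps y;
  eps_one : eps 1 = 1
}.

Record is_bialg_filtration (K : fieldType) (B : algType K)
  (Delta : B -> seq (B * B)) (Fil : nat -> B -> Prop) : Prop := {
  Fil_zero : forall n, Fil n 0;
  Fil_lin : forall n (a : K) x y, Fil n x -> Fil n y -> Fil n (a *: x + y);
  Fil_incr : forall n x, Fil n x -> Fil n.+1 x;
  Fil_exhaust : forall x, exists n, Fil n x;
  Fil_one : Fil 0%N 1;
  Fil_mul : forall i j x y, Fil i x -> Fil j y -> Fil (i + j)%N (x * y);
  Fil_Delta : forall n x, Fil n x ->
    exists t : seq (B * B), tensor_eq (Delta x) t /\
      forall p, p \in t -> exists i j, (i + j)%N = n /\ Fil i p.1 /\ Fil j p.2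
}.

Definition grouplike (K : fieldType) (B : algType K)
  (Delta : B -> seq (B * B)) (x : B) : Prop :=
  x != 0 /\ tensor_eq (Delta x) [:: (x, x)].

Definition in_grouplike_span (K : fieldType) (B : algType K)
  (Delta : B -> seq (B * B)) (x : B) : Prop :=
  exists s : seq (K * B), (forall p, p \in s -> grouplike Delta p.2) /\
    x = \sum_(p <- s) p.1 *: p.2.

Definition in_I (K : fieldType) (B : algType K)
  (Delta : B -> seq (B * B)) (x : B) : Prop :=
  exists s : seq (B * B * B), (forall t, t \in s -> grouplike Delta t.1.2) /\
    x = \sum_(t <- s) t.1.1 * (1 - t.1.2) * t.2.

(* Main.v *)
Require Import Defs.
From HB Require Import structures.
From mathcomp Require Import all_boot all_order all_algebra.
From mathcomp Require Import boolp classical_sets.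
Import GRing.Theory.
Set Implicit Arguments. Unset Strict Implicit. Unset Printing Implicit Defensive.
Local Open Scope classical_set_scope.
Local Open Scope ring_scope.

Section LinLift.
Variables (K : fieldType) (V W : lmodType K) (J : W -> Prop) (T : V -> W).
Hypothesis J0 : J 0.
Hypothesis Jlin : forall (a : K) x y, J x -> J y -> J (a *: x + y).
Hypothesis Tlin : forall (a : K) x y, J (T (a *: x + y) - (a *: T x + T y)).

Definition PG (G : set (V * W)) :=
  [/\ (forall (a : K) p q, G p -> G q -> G (a *: p.1 + q.1, a *: p.2 + q.2)),
      (forall x y1 y2, G (x, y1) -> G (x, y2) -> y1 = y2) &
      (forall x y, G (x, y) -> J (y - T x))].

Lemma Jopp x : J x -> J (- x).
Proof. by move=> Jx; rewrite -[- x]addr0 -scaleN1r; apply: Jlin. Qed.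

Lemma Jadd x y : J x -> J y -> J (x + y).
Proof. by move=> Jx Jy; rewrite -[x]scale1r; apply: Jlin. Qed.

Lemma JT0 : J (- T 0).
Proof.
have := Tlin 1 0 0; by rewrite !scale1r addr0 opprD addrA addrN add0r.
Qed.

Lemma lin_lift : exists S : V -> W,
  (forall (a : K) x y, S (a *: x + y) = a *: S x + S y) /\
  (forall x, J (S x - T x)).
Proof.
have [A [[Acl Afun AJ] Amax]] : exists A, PG A /\ forall B, A `<` B -> ~ PG B.
  apply: Zorn_bigcup => F FP Ftot; split.
  - move=> a p q [X FX Xp] [Y FY Yq].
    have [XY|YX] := Ftot X Y FX FY.
      by exists Y => //; have [+ _ _] := FP Y FY; apply => //; apply: XY.
    by exists X => //; have [+ _ _] := FP X FX; apply => //; apply: YX.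
  - move=> x y1 y2 [X FX Xp] [Y FY Yq].
    have [XY|YX] := Ftot X Y FX FY.
      by have [_ Yf _] := FP Y FY; apply: (Yf x) => //; apply: XY.
    by have [_ Xf _] := FP X FX; apply: (Xf x) => //; apply: YX.
  - by move=> x y [X FX Xp]; have [_ _ XJ] := FP X FX; apply: XJ.
pose A0 (z : V * W) := A z \/ z = (0, 0).
have A00 : forall p, A p -> A (0, 0).
  move=> [x y] Ap; have := Acl (-1) _ _ Ap Ap.
  by rewrite /= !scaleN1r !addNr.
have A0cl : forall (a : K) p q, A0 p -> A0 q -> A0 (a *: p.1 + q.1, a *: p.2 + q.2).
  move=> a [x1 y1] [x2 y2] [Ap|[-> ->]] [Aq|[-> ->]] /=; rewrite ?scaler0 ?add0r ?addr0.
  - by left; exact: (Acl a _ _ Ap Aq).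
  - by left; have := Acl a _ _ Ap (A00 _ Ap); rewrite /= !addr0.
  - by left.
  - by right.
have A0fun : forall x y1 y2, A0 (x, y1) -> A0 (x, y2) -> y1 = y2.
  move=> x y1 y2 [A1|[e1 e2]] [A2|[e3 e4]]; subst => //.
  - by apply: Afun A1 A2.
  - by apply: Afun A1 (A00 _ A1).
  - by apply: Afun (A00 _ A2) A2.
have A0J : forall x y, A0 (x, y) -> J (y - T x).
  move=> x y [Ap|[-> ->]]; first exact: AJ.
  by rewrite sub0r; apply: JT0.
have tot : forall v, exists y, A0 (v, y).
  move=> v; apply/not_existsP => nv.
  pose A' (z : V * W) := exists a x y, A0 (x, y) /\ z = (x + a *: v, y + a *: T v).
  apply: (Amax A'); split.
  - move=> p Ap; exists 0, p.1, p.2; split; first by left; case: p Ap.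
    by case: p {Ap} => x y; rewrite !scale0r !addr0.
  - move=> Hsub; apply: (nv (T v)); left; apply: Hsub.
    by exists 1, 0, 0; split; [right | rewrite !add0r !scale1r].
  - move=> b p q [a1 [x1 [y1 [H1 ->]]]] [a2 [x2 [y2 [H2 ->]]]] /=.
    exists (b * a1 + a2), (b *: x1 + x2), (b *: y1 + y2); split; first exact: (A0cl b (x1, y1) (x2, y2)).
    by congr (_, _); rewrite !scalerDr !scalerA scalerDl addrACA.
  - move=> z w1 w2 [a1 [x1 [y1 [H1 [E1 ->]]]]] [a2 [x2 [y2 [H2 [E2 ->]]]]].
    have [ea|nea] := eqVneq a1 a2.
      subst a2; move: E2; rewrite E1 => /addIr ex; subst x2.
      by rewrite (A0fun _ _ _ H1 H2).
    exfalso; apply: (nv ((a1 - a2)^-1 *: (y2 - y1))).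
    have Hc : (a1 - a2) *: v = x2 - x1.
      have : (x1 + a1 *: v) - (x1 + a2 *: v) = (x2 + a2 *: v) - (x1 + a2 *: v) by rewrite -E1 -E2.
      by rewrite opprD addrACA subrr add0r -scalerBl addrACA subrr addr0.
    have Ev : v = (a1 - a2)^-1 *: (x2 - x1) + 0.
      by rewrite addr0 -Hc scalerA mulVf ?scale1r // subr_eq0.
    have H3 := A0cl (-1) _ _ H1 H2; rewrite /= !scaleN1r in H3.
    have := A0cl (a1 - a2)^-1 _ (0, 0) H3 (or_intror erefl).
    by rewrite /= !addr0 !(addrC (- _)) -(addr0 (_ *: (x2 - x1))) -Ev.
  - move=> z w [a [x [y [H [-> ->]]]]].
    have J1 := A0J _ _ H.
    have J2 := Tlin a v x.
    have -> : y + a *: T v - T (x + a *: v) =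
              (y - T x) + - (T (a *: v + x) - (a *: T v + T x)).
      by rewrite (addrC x) opprB addrA addrACA addNr addr0.
    by apply: Jadd => //; apply: Jopp.
pose S v := proj1_sig (cid (tot v)).
have SP v : A0 (v, S v) by rewrite /S; case: cid.
exists S; split.
  move=> a x y; apply: (A0fun (a *: x + y)); first exact: SP.
  exact: (A0cl a (x, S x) (y, S y)).
by move=> x; apply: A0J (SP x).
Qed.

End LinLift.

Section Main.
Variables (K : fieldType) (B : algType K) (Delta : B -> seq (B * B)) (eps : B -> K)
  (Fil : nat -> B -> Prop).
Hypothesis HB : is_bialgebra Delta eps.
Hypothesis HF : is_bialg_filtration Delta Fil.
Hypothesis H0 : forall x : B, Fil 0%N x <-> in_grouplike_span Delta x.

Local Notation I := (in_I Delta).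

Lemma I0 : I 0.
Proof. by exists [::]; split => //; rewrite big_nil. Qed.

Lemma Ilin (a : K) x y : I x -> I y -> I (a *: x + y).
Proof.
move=> [s [Hs ->]] [t [Ht ->]].
exists ([seq (a *: u.1.1, u.1.2, u.2) | u <- s] ++ t); split.
  by move=> u; rewrite mem_cat => /orP[/mapP[w ws ->]|]; [exact: (Hs w ws) | exact: Ht].
rewrite big_cat big_map /= scaler_sumr; congr (_ + _); apply: eq_bigr => u _.
by rewrite -!scalerAl.
Qed.

Lemma Iadd x y : I x -> I y -> I (x + y).
Proof. by move=> ??; rewrite -[x]scale1r; apply: Ilin. Qed.
Lemma Iscale (a : K) x : I x -> I (a *: x).
Proof. by move=> ?; rewrite -[_ *: _]addr0; apply: Ilin => //; apply: I0. Qed.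
Lemma Iopp x : I x -> I (- x).
Proof. by move=> ?; rewrite -scaleN1r; apply: Iscale. Qed.
Lemma Isub x y : I x -> I y -> I (x - y).
Proof. by move=> ??; apply: Iadd => //; apply: Iopp. Qed.
Lemma Ichain x y z : I (x - y) -> I (y - z) -> I (x - z).
Proof. by move=> ??; rewrite -[x](subrK y) -addrA; apply: Iadd. Qed.
Lemma Isym x y : I (x - y) -> I (y - x).
Proof. by move=> ?; rewrite -opprB; apply: Iopp. Qed.

Lemma Imull b x : I x -> I (b * x).
Proof.
move=> [s [Hs ->]]; exists [seq (b * u.1.1, u.1.2, u.2) | u <- s]; split.
  by move=> u /mapP[w ws ->]; exact: (Hs w ws).
by rewrite big_map mulr_sumr; apply: eq_bigr => u _; rewrite !mulrA.
Qed.

Lemma Imulr x b : I x -> I (x * b).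
Proof.
move=> [s [Hs ->]]; exists [seq (u.1.1, u.1.2, u.2 * b) | u <- s]; split.
  by move=> u /mapP[w ws ->]; exact: (Hs w ws).
by rewrite big_map mulr_suml; apply: eq_bigr => u _; rewrite !mulrA.
Qed.

Lemma Isum (X : eqType) (s : seq X) (h : X -> B) :
  (forall p, p \in s -> I (h p)) -> I (\sum_(p <- s) h p).
Proof.
elim: s => [|u s IH] Hs; first by rewrite big_nil; apply: I0.
rewrite big_cons; apply: Iadd; first by apply: Hs; rewrite mem_head.
by apply: IH => p ps; apply: Hs; rewrite in_cons ps orbT.
Qed.

Lemma Igen g : grouplike Delta g -> I (1 - g).
Proof.
by move=> Hg; exists [:: (1, g, 1)]; split; [move=> t; rewrite inE => /eqP -> | rewrite big_seq1 mul1r mulr1].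
Qed.

Section Bil.
Variables (W : lmodType K) (f : B -> B -> W).
Hypothesis bf : bilinear_map f.

Lemma bilD_l u1 u2 v : f (u1 + u2) v = f u1 v + f u2 v.
Proof. by have := bf.1 1 u1 u2 v; rewrite !scale1r. Qed.
Lemma bilD_r u v1 v2 : f u (v1 + v2) = f u v1 + f u v2.
Proof. by have := bf.2 1 u v1 v2; rewrite !scale1r. Qed.
Lemma bil0_l v : f 0 v = 0.
Proof. by have := bilD_l 0 0 v; rewrite addr0 => /(congr1 (fun w => w - f 0 v)); rewrite addrK subrr. Qed.
Lemma bil0_r u : f u 0 = 0.
Proof. by have := bilD_r u 0 0; rewrite addr0 => /(congr1 (fun w => w - f u 0)); rewrite addrK subrr. Qed.
Lemma bilZ_l a u v : f (a *: u) v = a *: f u v.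
Proof. by have := bf.1 a u 0 v; rewrite !addr0 bil0_l addr0. Qed.
Lemma bilZ_r a u v : f u (a *: v) = a *: f u v.
Proof. by have := bf.2 a u v 0; rewrite !addr0 bil0_r addr0. Qed.
Lemma bilB_l u1 u2 v : f (u1 - u2) v = f u1 v - f u2 v.
Proof. by rewrite bilD_l -[- u2]scaleN1r bilZ_l scaleN1r. Qed.
Lemma bilB_r u v1 v2 : f u (v1 - v2) = f u v1 - f u v2.
Proof. by rewrite bilD_r -[- v2]scaleN1r bilZ_r scaleN1r. Qed.
End Bil.

Definition ev (W : lmodType K) (f : B -> B -> W) (s : seq (B * B)) :=
  \sum_(p <- s) f p.1 p.2.

Section EvDelta.
Variables (W : lmodType K) (f : B -> B -> W).
Hypothesis bf : bilinear_map f.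

Lemma ev_cat s t : ev f (s ++ t) = ev f s + ev f t.
Proof. by rewrite /ev big_cat. Qed.

Lemma evD x y : ev f (Delta (x + y)) = ev f (Delta x) + ev f (Delta y).
Proof.
have := Delta_linear HB 1 x y bf; rewrite scale1r /ev => ->.
by rewrite big_cat big_map; congr (_ + _); apply: eq_bigr => p _; rewrite scale1r.
Qed.

Lemma ev0 : ev f (Delta 0) = 0.
Proof.
by have := evD 0 0; rewrite addr0 => /(congr1 (fun w => w - ev f (Delta 0))); rewrite addrK subrr.
Qed.

Lemma evZ a x : ev f (Delta (a *: x)) = a *: ev f (Delta x).
Proof.
have E : ev f (Delta (a *: x + 0)) =
  ev f ([seq (a *: p.1, p.2) | p <- Delta x] ++ Delta 0) := Delta_linear HB a x 0 bf.
rewrite addr0 ev_cat ev0 addr0 in E; rewrite E /ev big_map scaler_sumr.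
by apply: eq_bigr => p _; rewrite bilZ_l.
Qed.

Lemma evB x y : ev f (Delta (x - y)) = ev f (Delta x) - ev f (Delta y).
Proof. by rewrite evD -[- y]scaleN1r evZ scaleN1r. Qed.

Lemma ev_sum (X : Type) (r : seq X) (F : X -> B) :
  ev f (Delta (\sum_(i <- r) F i)) = \sum_(i <- r) ev f (Delta (F i)).
Proof.
elim: r => [|u r IH]; first by rewrite !big_nil ev0.
by rewrite !big_cons evD IH.
Qed.

Lemma ev_mul x y : ev f (Delta (x * y)) =
  \sum_(p <- Delta x) \sum_(q <- Delta y) f (p.1 * q.1) (p.2 * q.2).
Proof.
rewrite /ev (Delta_mul HB x y bf) big_flatten /= big_map.
by apply: eq_bigr => p _; rewrite big_map.
Qed.

Lemma ev_rep x t : tensor_eq (Delta x) t -> ev f (Delta x) = ev f t.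
Proof. by move=> Ht; apply: Ht. Qed.

End EvDelta.


Lemma epsD x y : eps (x + y) = eps x + eps y.
Proof. by have := eps_linear HB 1 x y; rewrite scale1r mul1r. Qed.
Lemma eps0 : eps 0 = 0.
Proof. by have := epsD 0 0; rewrite addr0 => /(congr1 (fun w => w - eps 0)); rewrite addrK subrr. Qed.
Lemma epsZ a x : eps (a *: x) = a * eps x.
Proof. by have := eps_linear HB a x 0; rewrite !addr0 eps0 addr0. Qed.
Lemma epsB x y : eps (x - y) = eps x - eps y.
Proof. by rewrite epsD -[- y]scaleN1r epsZ mulN1r. Qed.
Lemma eps_sum (X : Type) (r : seq X) (F : X -> B) :
  eps (\sum_(i <- r) F i) = \sum_(i <- r) eps (F i).
Proof.
elim: r => [|u r IH]; first by rewrite !big_nil eps0.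
by rewrite !big_cons epsD IH.
Qed.

Lemma bil_epsl : bilinear_map (fun u v : B => eps u *: v).
Proof.
split=> a u1 u2 v; first by rewrite (eps_linear HB) scalerDl scalerA.
by rewrite scalerDr !scalerA mulrC.
Qed.

Lemma eps_g g : grouplike Delta g -> eps g = 1.
Proof.
move=> [gn0 Hg]; have := counit_l HB g.
have -> : \sum_(p <- Delta g) eps p.1 *: p.2 = ev (fun u v : B => eps u *: v) (Delta g) by [].
rewrite (ev_rep bil_epsl Hg) /ev big_seq1 /= => /eqP.
rewrite -subr_eq0 -[X in _ - X == _]scale1r -scalerBl scaler_eq0 (negbTE gn0) orbF subr_eq0.
by move/eqP.
Qed.

Definition linB (F : B -> B) := forall (a : K) x y, F (a *: x + y) = a *: F x + F y.

Section LinB.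
Variable F : B -> B.
Hypothesis lF : linB F.
Lemma linD x y : F (x + y) = F x + F y.
Proof. by have := lF 1 x y; rewrite !scale1r. Qed.
Lemma lin0 : F 0 = 0.
Proof. by have := linD 0 0; rewrite addr0 => /(congr1 (fun w => w - F 0)); rewrite addrK subrr. Qed.
Lemma linZ a x : F (a *: x) = a *: F x.
Proof. by have := lF a x 0; rewrite !addr0 lin0 addr0. Qed.
Lemma linBB x y : F (x - y) = F x - F y.
Proof. by rewrite linD -[- y]scaleN1r linZ scaleN1r. Qed.
Lemma lin_sum (X : Type) (r : seq X) (G : X -> B) :
  F (\sum_(i <- r) G i) = \sum_(i <- r) F (G i).
Proof.
elim: r => [|u r IH]; first by rewrite !big_nil lin0.
by rewrite !big_cons linD IH.
Qed.
End LinB.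

Lemma bil_FG F G : linB F -> linB G -> bilinear_map (fun u v => F u * G v).
Proof.
move=> lF lG; split=> a u1 u2 v.
  by rewrite lF mulrDl scalerAl.
by rewrite lG mulrDr scalerAr.
Qed.

Definition conv (F G : B -> B) (x : B) := \sum_(p <- Delta x) F p.1 * G p.2.

Lemma conv_ev F G x : conv F G x = ev (fun u v => F u * G v) (Delta x).
Proof. by []. Qed.

Lemma conv_lin F G : linB F -> linB G -> linB (conv F G).
Proof.
move=> lF lG a x y; have bFG := bil_FG lF lG.
by rewrite !conv_ev (evD bFG) (evZ bFG).
Qed.

Lemma conv_rep F G x t : linB F -> linB G -> tensor_eq (Delta x) t ->
  conv F G x = \sum_(p <- t) F p.1 * G p.2.
Proof. by move=> lF lG Ht; rewrite conv_ev (ev_rep (bil_FG lF lG) Ht). Qed.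

Lemma conv_extl F1 F2 G x : (forall y, F1 y = F2 y) -> conv F1 G x = conv F2 G x.
Proof. by move=> E; apply: eq_bigr => p _; rewrite E. Qed.
Lemma conv_extr F G1 G2 x : (forall y, G1 y = G2 y) -> conv F G1 x = conv F G2 x.
Proof. by move=> E; apply: eq_bigr => p _; rewrite E. Qed.

Lemma conv_subl F1 F2 G x :
  conv (fun y => F1 y - F2 y) G x = conv F1 G x - conv F2 G x.
Proof. by rewrite /conv -sumrB; apply: eq_bigr => p _; rewrite mulrBl. Qed.
Lemma conv_subr F G1 G2 x :
  conv F (fun y => G1 y - G2 y) x = conv F G1 x - conv F G2 x.
Proof. by rewrite /conv -sumrB; apply: eq_bigr => p _; rewrite mulrBr. Qed.

Definition eta (y : B) : B := (eps y)%:A.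
Lemma eta_lin : linB eta.
Proof. by move=> a x y; rewrite /eta (eps_linear HB) scalerDl scalerA. Qed.
Lemma lin_id : linB id.
Proof. by []. Qed.

Lemma conv_eta_r F x : linB F -> conv F eta x = F x.
Proof.
move=> lF; rewrite /conv /eta.
have -> : \sum_(p <- Delta x) F p.1 * (eps p.2)%:A = F (\sum_(p <- Delta x) eps p.2 *: p.1).
  by rewrite (lin_sum lF); apply: eq_bigr => p _; rewrite mulr_algr (linZ lF).
by rewrite (counit_r HB).
Qed.

Lemma conv_eta_l F x : linB F -> conv eta F x = F x.
Proof.
move=> lF; rewrite /conv /eta.
have -> : \sum_(p <- Delta x) (eps p.1)%:A * F p.2 = F (\sum_(p <- Delta x) eps p.1 *: p.2).
  by rewrite (lin_sum lF); apply: eq_bigr => p _; rewrite mulr_algl (linZ lF).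
by rewrite (counit_l HB).
Qed.

Lemma tril_FGH F G H : linB F -> linB G -> linB H ->
  trilinear_map (fun u v w => F u * G v * H w).
Proof.
move=> lF lG lH; split; last split => a.
- by move=> a u1 u2 v w; rewrite lF mulrDl mulrDl -!scalerAl.
- by move=> u v1 v2 w; rewrite lG mulrDr mulrDl -scalerAr -scalerAl.
- by move=> u v w1 w2; rewrite lH mulrDr -scalerAr.
Qed.

Lemma conv_assoc F G H x : linB F -> linB G -> linB H ->
  conv (conv F G) H x = conv F (conv G H) x.
Proof.
move=> lF lG lH; have := Delta_coassoc HB x (tril_FGH lF lG lH).
rewrite !big_flatten /= !big_map /conv => E.
transitivity (\sum_(p <- Delta x) \sum_(q <- Delta p.1) F q.1 * G q.2 * H p.2).
  by apply: eq_bigr => p _; rewrite mulr_suml.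
rewrite (_ : \sum_(p <- Delta x) \sum_(q <- Delta p.1) F q.1 * G q.2 * H p.2 =
   \sum_(p <- Delta x) \sum_(q <- [seq (q.1, q.2, p.2) | q <- Delta p.1]) F q.1.1 * G q.1.2 * H q.2).
  2: by apply: eq_bigr => p _; rewrite big_map.
rewrite E; apply: eq_bigr => p _; rewrite big_map mulr_sumr.
by apply: eq_bigr => q _; rewrite mulrA.
Qed.

Definition fS (y : B) : B := eta y - y.
Lemma fS_lin : linB fS.
Proof.
move=> a x y; by rewrite /fS eta_lin scalerBr opprD addrACA.
Qed.

Fixpoint fp (k : nat) : B -> B :=
  match k with 0 => eta | k'.+1 => conv (fp k') fS end.

Lemma fp_lin k : linB (fp k).
Proof. elim: k => [|k IH] /=; [exact: eta_lin | exact: conv_lin IH fS_lin]. Qed.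

Lemma Fil_mono i n y : Fil i y -> (i <= n)%N -> Fil n y.
Proof.
move=> Fi lein; rewrite -(subnKC lein); elim: (n - i)%N => [|d IH]; first by rewrite addn0.
by rewrite addnS; apply: (Fil_incr HF).
Qed.

Lemma fS_Fil0 y : Fil 0%N y -> I (fS y).
Proof.
move=> /H0 [s [Hs ->]]; rewrite /fS /eta eps_sum.
rewrite (eq_big_seq (fun p => p.1)); last by move=> p ps; rewrite epsZ eps_g ?mulr1 //; exact: Hs.
rewrite scaler_suml -sumrB; apply: Isum => p ps.
by rewrite -scalerBr; apply: Iscale; apply: Igen; apply: Hs.
Qed.

Lemma nilp k : forall n x, Fil n x -> (n < k)%N -> I (fp k x).
Proof.
elim: k => [|k IH] n x Fx //.
move=> ltnk; have [t [Ht Hdeg]] := Fil_Delta HF Fx.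
rewrite /= (conv_rep (fp_lin k) fS_lin Ht); apply: Isum => p pt.
have [i [j [eij [Fi Fj]]]] := Hdeg p pt.
case: j eij Fj => [|j] eij Fj.
  by apply: Imull; apply: fS_Fil0.
apply: Imulr; apply: (IH i) => //.
by rewrite -ltnS (leq_trans _ ltnk) // ltnS -eij addnS ltnS leq_addr.
Qed.

Definition Good (y : B) := exists t : seq (B * B), tensor_eq (Delta y) t /\
  forall p, p \in t -> I p.1 \/ I p.2.

Lemma Good0 : Good 0.
Proof. by exists [::]; split => // W f bf; rewrite -/(ev f _) ev0 // big_nil. Qed.

Lemma GoodD y z : Good y -> Good z -> Good (y + z).
Proof.
move=> [t1 [E1 H1]] [t2 [E2 H2]]; exists (t1 ++ t2); split.
  move=> W f bf; rewrite -!/(ev f _) (evD bf) ev_cat (ev_rep bf E1) (ev_rep bf E2) //.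
by move=> p; rewrite mem_cat => /orP[/H1|/H2].
Qed.

Lemma ev1g (W : lmodType K) (f : B -> B -> W) g : bilinear_map f -> grouplike Delta g ->
  ev f (Delta (1 - g)) = f 1 1 - f g g.
Proof.
move=> bf [_ Hg]; rewrite (evB bf) (ev_rep bf (Delta_one HB)) (ev_rep bf Hg).
by rewrite /ev !big_seq1.
Qed.

Lemma Good_gen a g b : grouplike Delta g -> Good (a * (1 - g) * b).
Proof.
move=> gg.
exists ([seq (p.1 * (1 - g) * q.1, p.2 * q.2) | p <- Delta a, q <- Delta b] ++
        [seq (p.1 * g * q.1, p.2 * (1 - g) * q.2) | p <- Delta a, q <- Delta b]).
split; last first.
  move=> z; rewrite mem_cat => /orP[] /flatten_mapP [p _ /mapP [q _ ->]] /=.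
    by left; exists [:: (p.1, g, q.1)]; split; [move=> u; rewrite inE => /eqP -> | rewrite big_seq1].
  by right; exists [:: (p.2, g, q.2)]; split; [move=> u; rewrite inE => /eqP -> | rewrite big_seq1].
move=> W f bf; rewrite -!/(ev f _) (ev_mul bf) ev_cat /ev !big_flatten /= !big_map.
pose h u v := \sum_(q <- Delta b) f (u * q.1) (v * q.2).
have bh : bilinear_map h.
  split=> c u1 u2 v; rewrite /h scaler_sumr -big_split; apply: eq_bigr => q _ /=.
    by rewrite mulrDl -scalerAl bf.1.
  by rewrite mulrDl -scalerAl bf.2.
have -> : \sum_(p <- Delta (a * (1 - g))) \sum_(q <- Delta b) f (p.1 * q.1) (p.2 * q.2)
   = ev h (Delta (a * (1 - g))) by [].
rewrite (ev_mul bh) -big_split; apply: eq_bigr => p _ /=.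
pose h' u v := h (p.1 * u) (p.2 * v).
have bh' : bilinear_map h'.
  split=> c u1 u2 v; rewrite /h' mulrDr -scalerAr; first exact: (proj1 bh).
  exact: (proj2 bh).
have -> : \sum_(r <- Delta (1 - g)) h (p.1 * r.1) (p.2 * r.2) = ev h' (Delta (1 - g)) by [].
rewrite (ev1g bh' gg) /h' /h !mulr1 !big_map -sumrB -big_split; apply: eq_bigr => q _ /=.
rewrite !mulrBr !mulr1 !mulrBl (bilB_l bf) (bilB_r bf).
by rewrite addrA subrK.
Qed.

Lemma I_Good x : I x -> Good x.
Proof.
move=> [s [Hs ->]]; elim: s Hs => [|u s IH] Hs; first by rewrite big_nil; apply: Good0.
rewrite big_cons; apply: GoodD; first by apply: Good_gen; apply: Hs; rewrite mem_head.
by apply: IH => v vs; apply: Hs; rewrite in_cons vs orbT.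
Qed.

Lemma eps_I x : I x -> eps x = 0.
Proof.
move=> [s [Hs ->]]; rewrite eps_sum big1_seq // => u us.
by rewrite !(eps_mul HB) epsB (eps_one HB) (eps_g (Hs u us)) subrr mulr0 mul0r.
Qed.

Lemma fp_I k x : I x -> I (fp k x).
Proof.
elim: k x => [|k IH] x Ix /=.
  by rewrite /eta eps_I // scale0r; apply: I0.
have [t [Ht Hp]] := I_Good Ix.
rewrite (conv_rep (fp_lin k) fS_lin Ht); apply: Isum => p pt.
case: (Hp p pt) => Ip.
  by apply: Imulr; apply: IH.
by apply: Imull; rewrite /fS /eta eps_I // scale0r sub0r; apply: Iopp.
Qed.

Definition Tn (N : nat) (y : B) : B := \sum_(k < N.+1) fp k y.

Lemma Tn_lin N : linB (Tn N).
Proof.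
move=> a x y; rewrite /Tn scaler_sumr -big_split; apply: eq_bigr => k _.
exact: fp_lin.
Qed.

Lemma Tn_stable n x d : Fil n x -> I (Tn (n + d) x - Tn n x).
Proof.
move=> Fx; elim: d => [|d IH]; first by rewrite addn0 subrr; apply: I0.
rewrite addnS /Tn big_ord_recr /= -/(Tn _ x) addrAC; apply: Iadd => //.
by apply: (@nilp (n + d).+1 n x Fx); rewrite ltnS leq_addr.
Qed.

Lemma Tn_stable' n N x : Fil n x -> (n <= N)%N -> I (Tn N x - Tn n x).
Proof. by move=> Fx le; rewrite -(subnKC le); apply: Tn_stable. Qed.

Definition deg (x : B) : nat := proj1_sig (cid (Fil_exhaust HF x)).
Lemma degP x : Fil (deg x) x.
Proof. by rewrite /deg; case: cid. Qed.

Definition Tm (x : B) : B := Tn (deg x) x.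

Lemma Tm_Tn n x : Fil n x -> I (Tm x - Tn n x).
Proof.
move=> Fx; apply: (@Ichain _ (Tn (maxn (deg x) n) x)).
  by apply: Isym; apply: Tn_stable' (degP x) (leq_maxl _ _).
by apply: Tn_stable' Fx (leq_maxr _ _).
Qed.

Lemma Jmod (u v w U V W0 : B) (a : K) : U = a *: V + W0 ->
  I (u - U) -> I (v - V) -> I (w - W0) -> I (u - (a *: v + w)).
Proof.
move=> hU Iu Iv Iw.
have -> : u - (a *: v + w) = (u - U) - (a *: (v - V) + (w - W0)).
  by rewrite hU scalerBr addrACA -opprD opprB addrA subrK.
by apply: Isub => //; apply: Iadd => //; apply: Iscale.
Qed.

Lemma Tm_lin a x y : I (Tm (a *: x + y) - (a *: Tm x + Tm y)).
Proof.
set N := maxn (deg (a *: x + y)) (maxn (deg x) (deg y)).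
have Fz : Fil N (a *: x + y) := Fil_mono (degP _) (leq_maxl _ _).
have Fx : Fil N x.
  by apply: Fil_mono (degP x) _; rewrite (leq_trans (leq_maxl _ (deg y))) // leq_maxr.
have Fy : Fil N y.
  by apply: Fil_mono (degP y) _; rewrite (leq_trans (leq_maxr (deg x) _)) // leq_maxr.
by apply: (Jmod (Tn_lin N a x y)); apply: Tm_Tn.
Qed.

Lemma exS : exists S : B -> B, linB S /\ forall x, I (S x - Tm x).
Proof.
have [S [lS HS]] := @lin_lift K B B I Tm I0 Ilin Tm_lin.
by exists S.
Qed.

Lemma conv_fp_id k x : conv (fp k) id x = fp k x - fp k.+1 x.
Proof.
rewrite (@conv_extr _ _ (fun y => eta y - fS y)); last by move=> y; rewrite /fS opprB addrC subrK.
by rewrite conv_subr conv_eta_r //; apply: fp_lin.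
Qed.

Lemma fS_fp k y : conv fS (fp k) y = fp k.+1 y.
Proof.
elim: k y => [|k IH] y.
  by rewrite /= conv_eta_r ?conv_eta_l //; apply: fS_lin.
rewrite [fp k.+2]/= [fp k.+1]/= -conv_assoc; try apply: fS_lin; try apply: fp_lin.
by apply: conv_extl; exact: IH.
Qed.

Lemma conv_id_fp k x : conv id (fp k) x = fp k x - fp k.+1 x.
Proof.
rewrite (@conv_extl _ (fun y => eta y - fS y)); last by move=> y; rewrite /fS opprB addrC subrK.
by rewrite conv_subl conv_eta_l ?fS_fp //; apply: fp_lin.
Qed.

Lemma tele (u : nat -> B) N : \sum_(k < N.+1) (u k - u k.+1) = u 0%N - u N.+1.
Proof.
elim: N => [|N IH]; first by rewrite big_ord1.
by rewrite big_ord_recr /= IH addrA subrK.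
Qed.

Lemma conv_Tn_id N x : conv (Tn N) id x = eta x - fp N.+1 x.
Proof.
rewrite -[eta x]/(fp 0 x) -(tele (fun k => fp k x)).
under eq_bigr => k _ do rewrite -conv_fp_id.
rewrite /conv /Tn exchange_big /=; apply: eq_bigr => p _.
by rewrite mulr_suml.
Qed.

Lemma conv_id_Tn N x : conv id (Tn N) x = eta x - fp N.+1 x.
Proof.
rewrite -[eta x]/(fp 0 x) -(tele (fun k => fp k x)).
under eq_bigr => k _ do rewrite -conv_id_fp.
rewrite /conv /Tn exchange_big /=; apply: eq_bigr => p _.
by rewrite mulr_sumr.
Qed.

Lemma S_Tn S n x : (forall x, I (S x - Tm x)) -> Fil n x -> I (S x - Tn n x).
Proof. by move=> HS Fx; apply: Ichain (HS x) (Tm_Tn Fx). Qed.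

Lemma antipode S x : linB S -> (forall x, I (S x - Tm x)) ->
  I (\sum_(p <- Delta x) S p.1 * p.2 - (eps x)%:A) /\
  I (\sum_(p <- Delta x) p.1 * S p.2 - (eps x)%:A).
Proof.
move=> lS HS; have [n Fx] := Fil_exhaust HF x.
have [t [Ht Hdeg]] := Fil_Delta HF Fx.
have Fl p : p \in t -> Fil n p.1 /\ Fil n p.2.
  move=> pt; have [i [j [eij [Fi Fj]]]] := Hdeg p pt.
  by split; [apply: Fil_mono Fi _ | apply: Fil_mono Fj _]; rewrite -eij ?leq_addr ?leq_addl.
split.
- have -> : \sum_(p <- Delta x) S p.1 * p.2 = conv S id x by [].
  rewrite (conv_rep lS lin_id Ht).
  have -> : \sum_(p <- t) S p.1 * id p.2 =
     \sum_(p <- t) (S p.1 - Tn n p.1) * p.2 + conv (Tn n) id x.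
    rewrite (conv_rep (Tn_lin n) lin_id Ht) -big_split; apply: eq_bigr => p _.
    by rewrite /= -mulrDl subrK.
  rewrite conv_Tn_id -/(eta x) (addrC (eta x)) addrA addrK.
  apply: Isub; last by apply: (@nilp n.+1 n x Fx).
  by apply: Isum => p pt; apply: Imulr; apply: S_Tn => //; case: (Fl p pt).
- have -> : \sum_(p <- Delta x) p.1 * S p.2 = conv id S x by [].
  rewrite (conv_rep lin_id lS Ht).
  have -> : \sum_(p <- t) id p.1 * S p.2 =
     \sum_(p <- t) p.1 * (S p.2 - Tn n p.2) + conv id (Tn n) x.
    rewrite (conv_rep lin_id (Tn_lin n) Ht) -big_split; apply: eq_bigr => p _.
    by rewrite /= -mulrDr subrK.
  rewrite conv_id_Tn -/(eta x) (addrC (eta x)) addrA addrK.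
  apply: Isub; last by apply: (@nilp n.+1 n x Fx).
  by apply: Isum => p pt; apply: Imull; apply: S_Tn => //; case: (Fl p pt).
Qed.

Lemma S_I S x : (forall x, I (S x - Tm x)) -> I x -> I (S x).
Proof.
move=> HS Ix; rewrite -(subrK (Tm x) (S x)); apply: Iadd => //.
by rewrite /Tm /Tn; apply: Isum => k _; apply: fp_I.
Qed.

End Main.

Unset Implicit Arguments.
Local Close Scope classical_set_scope.

Theorem lemma3p5 (K : fieldType) (B : algType K)
  (Delta : B -> seq (B * B)) (eps : B -> K) (Fil : nat -> B -> Prop) :
  is_bialgebra Delta eps ->
  is_bialg_filtration Delta Fil ->
  (forall x : B, Fil 0%N x <-> in_grouplike_span Delta x) ->
  (* I is a two-sided coideal *)
  ((forall x : B, in_I Delta x ->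
      exists t : seq (B * B), tensor_eq (Delta x) t /\
        forall p, p \in t -> in_I Delta p.1 \/ in_I Delta p.2) /\
   (forall x : B, in_I Delta x -> eps x = 0)) /\
  (* H = B/I with H_n = image of B_n is connected: H_0 = K 1 *)
  ((forall x : B, Fil 0%N x -> exists c : K, in_I Delta (x - c%:A)) /\
   (forall c : K, exists x : B, Fil 0%N x /\ in_I Delta (x - c%:A))) /\
  (* H is a Hopf algebra: an antipode S on H = B/I, given by a linear lift
     S : B -> B preserving I, with m(S (x) id)Delta = m(id (x) S)Delta = eta eps in H *)
  (exists S : B -> B,
     (forall (a : K) (x y : B), S (a *: x + y) = a *: S x + S y) /\
     (forall x : B, in_I Delta x -> in_I Delta (S x)) /\
     (forall x : B,
        in_I Delta (\sum_(p <- Delta x) S p.1 * p.2 - (eps x)%:A) /\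
        in_I Delta (\sum_(p <- Delta x) p.1 * S p.2 - (eps x)%:A))).
Proof.
move=> HB HF H0; split; [split|split; [split|]].
- by move=> x Ix; exact: (I_Good HB Ix).
- by move=> x Ix; exact: (eps_I HB Ix).
- move=> x /H0 [s [Hs ->]]; exists (\sum_(p <- s) p.1).
  exists [seq ((- p.1)%:A, p.2, 1) | p <- s]; split.
    by move=> u /mapP [p ps ->]; exact: (Hs p ps).
  rewrite big_map scaler_suml -sumrB; apply: eq_bigr => p _.
  by rewrite mulr1 mulr_algl scaleNr scalerBr opprB.
- move=> c; exists c%:A; split; last by rewrite subrr; apply: I0.
  by have := Fil_lin HF c (Fil_one HF) (Fil_zero HF 0); rewrite addr0.
- have [S [lS HS]] := exS HB HF H0.
  exists S; split => //; split.
    by move=> x Ix; apply: (S_I HB HS Ix).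
  by move=> x; apply: (antipode HB H0 x lS HS).
Qed.
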